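(* Let $G$ be the directed graph with distinct vertices $v_1,v_2,\dots$ and $w_1,w_2,\dots$, and edges $v_i\to v_{i+1}$ and $w_i\to v_i$ for all $i\ge1$ (so each $w_i$ is parentless with lone child $v_i$), with birthdates $t(v_i)=i$ and $t(w_i)=i-\tfrac12$. Then $(G,t)$ is an infinite biosphere, and $v_1$ does not belong to any maximal element of $\mathrm{IAP}\cap\mathrm{CONV}\cap\mathrm{REF}$.
   Context: An infinite biosphere is a directed graph $G$ together with a function $t$ assigning a real number $t(v)$ to each vertex, such that: (1) if $v$ is a parent of $w$ (edge from $v$ to $w$) then $t(v)<t(w)$; (2) for every $r\in\mathbb R$ at most finitely many vertices $v$ have $t(v)<r$; (3) every vertex has finitely many children; (4) $G$ is infinite. $v$ is an ancestor of $w$ (and $w$ a descendant of $v$) if there is a directed path $v=v_1,\dots,v_n=w$ with $n>1$. $\mathrm{IAP}$: sets $S$ of vertices such that no $v\in S$ has both infinitely many descendants in $S$ and infinitely many non-descendants in $S$. $\mathrm{CONV}$: sets $S$ such that every vertex having an ancestor in $S$ and a descendant in $S$ lies in $S$. $\mathrm{REF}$: sets $S$ such that every $v\in S$ with infinitely many descendants in $G$ has infinitely many descendants in $S$. A maximal element of a family of sets is a member not properly contained in any other member. *)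

(* Defs.v *)
From Stdlib Require Import Reals List Relations.
Open Scope R_scope.

Definition finite_set {V : Type} (P : V -> Prop) : Prop :=
  exists l : list V, forall x, P x -> In x l.
Definition infinite_set {V : Type} (P : V -> Prop) : Prop := ~ finite_set P.

Section Biosphere.
Context {V : Type} (E : V -> V -> Prop) (t : V -> R).
(* E v w : there is an edge v -> w, i.e. v is a parent of w *)

Definition is_infinite_biosphere : Prop :=
  (forall v w, E v w -> t v < t w) /\
  (forall r : R, finite_set (fun v => t v < r)) /\
  (forall v, finite_set (fun w => E v w)) /\
  infinite_set (fun _ : V => True).

Definition ancestor : V -> V -> Prop := clos_trans V E.

Definition IAP (S : V -> Prop) : Prop :=
  forall v, S v ->
    ~ (infinite_set (fun w => S w /\ ancestor v w) /\
       infinite_set (fun w => S w /\ ~ ancestor v w)).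

Definition CONV (S : V -> Prop) : Prop :=
  forall v, (exists a, S a /\ ancestor a v) -> (exists d, S d /\ ancestor v d) -> S v.

Definition REF (S : V -> Prop) : Prop :=
  forall v, S v -> infinite_set (fun w => ancestor v w) ->
    infinite_set (fun w => S w /\ ancestor v w).

Definition IAP_CONV_REF (S : V -> Prop) : Prop := IAP S /\ CONV S /\ REF S.

Definition subset (S S' : V -> Prop) : Prop := forall x, S x -> S' x.

Definition maximal_IAP_CONV_REF (S : V -> Prop) : Prop :=
  IAP_CONV_REF S /\
  ~ (exists S', IAP_CONV_REF S' /\ subset S S' /\ ~ subset S' S).
End Biosphere.

(* The example graph. vv n stands for v_{n+1}, ww n for w_{n+1} (n : nat, 0-based). *)
Inductive Vx : Type := vv (n : nat) | ww (n : nat).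

Definition Ex (a b : Vx) : Prop :=
  match a, b with
  | vv i, vv j => j = S i
  | ww i, vv j => j = i
  | _, _ => False
  end.

Definition tx (a : Vx) : R :=
  match a with
  | vv n => INR (S n)
  | ww n => INR (S n) - / 2
  end.

(* Main.v *)
Require Import Defs.
From Stdlib Require Import Reals List Relations.
From Stdlib Require Import Lia Lra Classical.

Lemma anc_vv : forall i m, (i < m)%nat -> ancestor Ex (vv i) (vv m).
Proof.
  intros i m H. induction H.
  - apply t_step. exact eq_refl.
  - eapply t_trans. exact IHle. apply t_step. exact eq_refl.
Qed.

Lemma anc_ww : forall i m, (i <= m)%nat -> ancestor Ex (ww i) (vv m).
Proof.
  intros i m H. destruct (Nat.eq_dec i m).
  - subst. apply t_step. exact eq_refl.
  - apply t_trans with (vv i). apply t_step. exact eq_refl. apply anc_vv. lia.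
Qed.

Definition idx (x : Vx) : nat := match x with vv n => n | ww n => n end.

Lemma anc_inv : forall x y, ancestor Ex x y ->
  exists m, y = vv m /\ (match x with vv i => (i < m)%nat | ww i => (i <= m)%nat end).
Proof.
  intros x y H. induction H as [a b Hab | a b c _ IH1 _ IH2].
  - destruct a, b; simpl in Hab; try contradiction; subst; eexists; split; eauto; lia.
  - destruct IH1 as [m1 [-> H1]]. destruct IH2 as [m2 [-> H2]].
    exists m2. split; auto. destruct a; lia.
Qed.

Lemma fresh : forall l : list Vx, exists N, forall n, (N <= n)%nat ->
  ~ In (vv n) l /\ ~ In (ww n) l.
Proof.
  induction l as [|a l IH].
  - exists 0%nat. intros; simpl; tauto.
  - destruct IH as [N HN]. exists (Nat.max N (S (idx a))). intros n Hn.
    destruct (HN n) as [H1 H2]; [lia|].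
    split; intros [E|E]; try tauto; subst a; simpl in Hn; lia.
Qed.

Lemma fin_of : forall (P Q : Vx -> Prop), ~ (infinite_set P /\ infinite_set Q) ->
  infinite_set P -> finite_set Q.
Proof.
  intros P Q H HP. apply NNPP. intro HQ. apply H. split; auto.
Qed.

Theorem mainTheorem11 :
  is_infinite_biosphere Ex tx /\
  forall S : Vx -> Prop, maximal_IAP_CONV_REF Ex S -> ~ S (vv 0).
Proof.
  split.
  - split; [|split; [|split]].
    + intros [i|i] [j|j] H; simpl in H; try contradiction; subst; simpl tx;
        rewrite ?(S_INR (S i)), ?S_INR; try lra.
    + intros r. destruct (INR_unbounded r) as [N HN].
      exists (map vv (seq 0 N) ++ map ww (seq 0 N)). intros x Hx.
      apply in_or_app. destruct x as [n|n]; unfold tx in Hx.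
      * left. apply in_map. apply in_seq. split; [lia|].
        destruct (Compare_dec.le_lt_dec N n) as [h|h]; [|lia].
        apply le_INR in h. rewrite S_INR in Hx. lra.
      * right. apply in_map. apply in_seq. split; [lia|].
        destruct (Compare_dec.le_lt_dec N n) as [h|h]; [|lia].
        apply le_INR in h. rewrite S_INR in Hx. lra.
    + intros [i|i].
      * exists (vv (S i) :: nil). intros [j|j] H; simpl in H; try contradiction; subst; simpl; auto.
      * exists (vv i :: nil). intros [j|j] H; simpl in H; try contradiction; subst; simpl; auto.
    + intros [l Hl]. destruct (fresh l) as [N HN]. destruct (HN N (le_n _)) as [H _].
      apply H, Hl. exact I.
  - intros X [[HI [HC HR]] Hmax] H0.
    assert (Hinf : forall x, infinite_set (fun w => ancestor Ex x w)).
    { intros x [l Hl]. destruct (fresh l) as [N HN].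
      destruct (HN (Nat.max N (S (idx x))) ltac:(lia)) as [H _]. apply H, Hl.
      destruct x; [apply anc_vv|apply anc_ww]; simpl; lia. }
    assert (Hall : forall j, X (vv j)).
    { intro j. destruct j as [|j]; [exact H0|].
      pose proof (HR _ H0 (Hinf _)) as Hi.
      apply HC.
      - exists (vv 0). split; auto. apply anc_vv. lia.
      - apply NNPP. intro Hn. apply Hi. exists (map vv (seq 0 (S (S j)))).
        intros w [Sw Aw]. destruct (anc_inv _ _ Aw) as [m [-> Hm]].
        apply in_map. apply in_seq. split; [lia|].
        destruct (Compare_dec.le_lt_dec (S (S j)) m); [|lia].
        exfalso. apply Hn. exists (vv m). split; auto. apply anc_vv. lia. }
    pose proof (fin_of _ _ (HI _ H0)) as Hf.
    assert (Hdesc : infinite_set (fun w => X w /\ ancestor Ex (vv 0) w)).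
    { intros [l Hl]. destruct (fresh l) as [N HN].
      destruct (HN (S N) ltac:(lia)) as [H _]. apply H, Hl. split; auto. apply anc_vv. lia. }
    destruct (Hf Hdesc) as [L HL].
    destruct (fresh L) as [K HK]. destruct (HK K (le_n _)) as [_ HKL].
    assert (HwS : ~ X (ww K)).
    { intro h. apply HKL, HL. split; auto. intro a. destruct (anc_inv _ _ a) as [m [E _]]. discriminate. }
    apply Hmax. exists (fun x => X x \/ x = ww K). split; [split; [|split]|split].
    + intros v Hv [_ Hnd]. apply Hnd.
      exists (map vv (seq 0 (S (idx v))) ++ L ++ ww K :: nil).
      intros w [Sw Aw]. apply in_or_app. destruct Sw as [Sw| ->].
      2:{ right. apply in_or_app. right. simpl; auto. }
      destruct w as [m|m].
      * left. apply in_map, in_seq. split; [lia|].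
        destruct (Compare_dec.le_lt_dec (S (idx v)) m); [|lia]. exfalso. apply Aw.
        destruct v; [apply anc_vv|apply anc_ww]; simpl in *; lia.
      * right. apply in_or_app. left. apply HL. split; auto. intro a.
        destruct (anc_inv _ _ a) as [m' [E _]]. discriminate.
    + intros v [a [_ Aa]] _. destruct (anc_inv _ _ Aa) as [m [-> _]]. left. apply Hall.
    + intros v Hv _ [l Hl]. destruct (fresh l) as [N HN].
      destruct (HN (Nat.max N (S (idx v))) ltac:(lia)) as [H _]. apply H, Hl.
      split; [left; apply Hall|]. destruct v; [apply anc_vv|apply anc_ww]; simpl; lia.
    + intros x Hx; left; exact Hx.
    + intro Hs. apply HwS, Hs. right; reflexivity.
Qed.
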